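(* Let $\mathcal{D}$ be a relational database (in the setting described in the context), let $R$ be a (binary) relationship variable and let $\mathbf{R}$ be a set of relationship variables. Let $\mathit{Vars}$ be a set of random variables that contains neither $R$ nor any of the relationship attribute variables $\mathit{2Atts}(R)$ of $R$. Let $\mathbb{X}_1,\ldots,\mathbb{X}_l$ ($l \ge 0$) be the first-order variables that occur as arguments of $R$ but do not occur in $\mathit{Vars}$. Then \begin{align*} &\mathit{ct}(\mathit{Vars} \cup \mathit{1Atts}(R)\mid \mathbf{R} = \mathrm{T}, R = \mathrm{F}) \\ &= \mathit{ct}(\mathit{Vars}\mid \mathbf{R} = \mathrm{T}, R = * ) \times \mathit{ct}(\mathbb{X}_1) \times \cdots \times \mathit{ct}(\mathbb{X}_l) \;-\; \mathit{ct}(\mathit{Vars} \cup \mathit{1Atts}(R)\mid \mathbf{R} = \mathrm{T}, R = \mathrm{T}), \end{align*} where $\times$ and $-$ are the contingency-table cross product and count difference. If $l=0$, the equation holds without the cross-product terms $\mathit{ct}(\mathbb{X}_i)$. Here every first-order variable is assumed to have at least one descriptive (unary) attribute.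
   Context: A population is a finite set of individuals. A functor $f:\mathcal{P}_1,\ldots,\mathcal{P}_a\to V_f$ maps tuples of individuals to a finite range $V_f$; if $V_f=\{\mathrm{T},\mathrm{F}\}$ it is a predicate, and a predicate with two arguments is a (binary) relationship; other functors are attributes. A random variable is $f(\mathbb{X}_1,\ldots,\mathbb{X}_a)$ with each $\mathbb{X}_i$ a first-order variable ranging over a population. A database instance determines the value of every functor on every tuple of individuals; for a relationship $R(\mathbb{X},\mathbb{Y})$, its relationship attributes (collectively $\mathit{2Atts}(R)$, e.g. $\mathit{salary}(\mathbb{X},\mathbb{Y})$) take the reserved value $n/a$ exactly on pairs where $R=\mathrm{F}$. For a first-order variable $\mathbb{X}$, $\mathit{1Atts}(\mathbb{X})$ is the set of unary attribute variables of $\mathbb{X}$; for a relationship (or set of relationships) $R$, $\mathit{1Atts}(R)$ is the union of $\mathit{1Atts}(\mathbb{X})$ over the first-order variables $\mathbb{X}$ occurring in $R$. A first-order variable occurs in a set of random variables if it is an argument of one of them. A query is a set of (variable = value) pairs; its result set is the set of instantiations of the first-order variables occurring in the query by individuals of their populations that make all pairs true in the database, and its count is the size of the result set. The value ''$*$'' (''don't care'') for a variable means the variable is not constrained and is omitted from the query (so its first-order variables are not instantiated on its account). The contingency table $\mathit{ct}(V_1,\ldots,V_n)$ has one row per assignment of values to $V_1,\ldots,V_n$ with a count column giving the count of the corresponding query; $\mathit{ct}(\mathbb{X})$ denotes $\mathit{ct}(\mathit{1Atts}(\mathbb{X}))$. The conditional contingency table $\mathit{ct}(V_1,\ldots,V_k\mid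 V_{k+1}=v_{k+1},\ldots,V_{k+m}=v_{k+m})$ has columns $V_1,\ldots,V_k$, and each row's count is the count of the query consisting of that row's assignment together with the conditions. $\mathbf{R}=\mathrm{T}$ means every relationship in $\mathbf{R}$ equals $\mathrm{T}$. Rows with count $0$ are omitted. Cross product: $\mathit{ct}_1(\mathbf{U})\times \mathit{ct}_2(\mathbf{V})$ has as rows all pairs of rows (over disjoint column sets), with count equal to the product of counts. Count difference $\mathit{ct}_1(\mathbf{V})-\mathit{ct}_2(\mathbf{V})$ (same columns): each row's count is its count in $\mathit{ct}_1$ minus its count in $\mathit{ct}_2$, a missing row counting as $0$; it is defined only when the rows of $\mathit{ct}_2$ are among those of $\mathit{ct}_1$ with counts no larger.
   Formalization: Each first-order variable $\mathbb{X}$ of R occurring in Vars is assumed to have $\mathit{1Atts}(\mathbb{X})$ contained in Vars, and each first-order variable of R occurring in $\mathbf{R}$ also occurs in Vars. The statement above fails without it. *)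

(* Defs.v *)
From mathcomp Require Import all_boot.
Set Implicit Arguments. Unset Strict Implicit. Unset Printing Implicit Defensive.

(*   FOV      : first-order variables; FOV X ranges over members (popOf X)   *)
(*   Val      : a common type containing all values; range f = V_f          *)
(*   vT, vF   : the truth values T and F; vNA the reserved value n/a         *)
(*   relAtt r g : g is a relationship attribute (functor) of the relationship *)
(*              functor r                                                    *)
Record schema := Schema {
  Ind : finType;
  Pop : finType;
  members : Pop -> {set Ind};
  FOV : finType;
  popOf : FOV -> Pop;
  Fn : finType;
  Val : finType;
  fdom : Fn -> seq Pop;
  range : Fn -> {set Val};
  vT : Val; vF : Val; vNA : Val;
  relAtt : Fn -> Fn -> bool
}.

Section Database.
Variable S : schema.

Definition isPred (f : Fn S) : bool := range f == [set vT S; vF S].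
Definition isRel (f : Fn S) : bool := isPred f && (size (fdom f) == 2).

(* A random variable f(X1,...,Xa). *)
Definition rv := (Fn S * seq (FOV S))%type.
Definition wf_rv (v : rv) : bool := map (@popOf S) v.2 == fdom v.1.

Definition typed (f : Fn S) (t : seq (Ind S)) : bool :=
  all2 (fun i p => i \in members p) t (fdom f).

Definition wf_schema : Prop :=
  [/\ vT S != vF S, vNA S != vT S, vNA S != vF S &
      forall r g, relAtt r g ->
        [/\ isRel r, fdom g = fdom r, ~~ isPred g & vNA S \in range g]].

Definition valid_db (db : Fn S -> seq (Ind S) -> Val S) : Prop :=
  (forall f t, typed f t -> db f t \in range f) /\
  (forall r g t, relAtt r g -> typed r t ->
      (db g t == vNA S) = (db r t == vF S)).

Definition oneAtts (X : FOV S) : seq rv :=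
  [seq (f, [:: X]) | f <- enum (Fn S) &
     (fdom f == [:: popOf X]) && ~~ isPred f].

Definition oneAttsR (R : rv) : seq rv := flatten [seq oneAtts X | X <- R.2].

Definition twoAtts (R : rv) : seq rv :=
  [seq (g, R.2) | g <- enum (Fn S) & relAtt R.1 g].

Definition occ (vs : seq rv) : seq (FOV S) := flatten (map snd vs).

Variable db : Fn S -> seq (Ind S) -> Val S.

(* Partial instantiations of the first-order variables. *)
Definition grounding := {ffun FOV S -> option (Ind S)}.

Definition eval_rv (g : grounding) (v : rv) : Val S :=
  db v.1 (pmap (fun X => g X) v.2).

(* A query is a list of (variable = value) pairs; its count is the number of *)
(* instantiations of the first-order variables occurring in the query by     *)
(* individuals of their populations that make all pairs true.                *)
Definition query := seq (rv * Val S).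

Definition qcount (q : query) : nat :=
  #|[set g : grounding |
      [forall X, if X \in occ (map fst q)
                 then (if g X is Some i then i \in members (popOf X) else false)
                 else g X == None]
      && all (fun p => eval_rv g p.1 == p.2) q]|.

(* Contingency tables: a column list and a count for every row. A row is an *)
(* assignment of values to the columns, represented by a total map          *)
(* rv -> Val (only its values on the columns matter); rows with count 0     *)
(* are the omitted ones.                                                    *)
Record table := Table { tcols : seq rv; tcnt : (rv -> Val S) -> nat }.

Definition ct (cols : seq rv) (cond : query) : table :=
  Table cols (fun a => qcount ([seq (v, a v) | v <- cols] ++ cond)).

Definition ctX (X : FOV S) : table := ct (oneAtts X) [::].

Definition ct_cross (t1 t2 : table) : table :=
  Table (tcols t1 ++ tcols t2) (fun a => tcnt t1 a * tcnt t2 a).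
Definition cross_defined (t1 t2 : table) : Prop :=
  forall v, v \in tcols t1 -> v \notin tcols t2.

Definition ct_diff (t1 t2 : table) : table :=
  Table (tcols t1) (fun a => tcnt t1 a - tcnt t2 a).
Definition diff_defined (t1 t2 : table) : Prop :=
  tcols t1 =i tcols t2 /\ forall a, tcnt t2 a <= tcnt t1 a.

Definition table_eq (t1 t2 : table) : Prop :=
  tcols t1 =i tcols t2 /\ forall a, tcnt t1 a = tcnt t2 a.

Definition cross_list (t : table) (ts : seq table) : table :=
  foldl ct_cross t ts.
Fixpoint cross_list_defined (t : table) (ts : seq table) : Prop :=
  match ts with
  | [::] => True
  | t' :: ts' => cross_defined t t' /\ cross_list_defined (ct_cross t t') ts'
  end.

Definition condT (Rs : seq rv) : query := [seq (r, vT S) | r <- Rs].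

End Database.

(* Main.v *)
Require Import Defs.
From mathcomp Require Import all_boot.
Set Implicit Arguments. Unset Strict Implicit. Unset Printing Implicit Defensive.

Definition domg (S : schema) (D : pred (FOV S)) (g : grounding S) : bool :=
  [forall X, if D X then (if g X is Some i then i \in members (popOf X) else false)
             else g X == None].

Lemma domgP (S : schema) (D : pred (FOV S)) (g : grounding S) :
  reflect (forall X, if D X then (if g X is Some i then i \in members (popOf X) else false)
             else g X == None) (domg D g).
Proof. exact: forallP. Qed.

Lemma domg_ext (S : schema) (D D' : pred (FOV S)) g : D =1 D' -> domg D g = domg D' g.
Proof. by move=> e; apply: eq_forallb => X; rewrite e. Qed.

Definition mrg (S : schema) (D : pred (FOV S)) (p : grounding S * grounding S) : grounding S :=
  [ffun X => if D X then p.1 X else p.2 X].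

Lemma card_merge (S : schema) (D E : pred (FOV S)) (P Q : grounding S -> bool) :
  (forall X, D X -> ~~ E X) ->
  (forall g g' : grounding S, (forall X, D X -> g X = g' X) -> P g = P g') ->
  (forall g g' : grounding S, (forall X, E X -> g X = g' X) -> Q g = Q g') ->
  #|[set g | domg (predU D E) g && P g && Q g]| =
  #|[set g | domg D g && P g]| * #|[set g | domg E g && Q g]|.
Proof.
move=> dis HP HQ.
rewrite -cardsX.
set A := [set g | domg D g && P g]; set B := [set g | domg E g && Q g].
have inj : {in setX A B &, injective (mrg D)}.
  move=> [g1 g2] [h1 h2]; rewrite !inE /= => /andP[/andP[/domgP d1 _] /andP[/domgP e1 _]].
  move=> /andP[/andP[/domgP d2 _] /andP[/domgP e2 _]] eq.
  have {}eq : forall X, mrg D (g1, g2) X = mrg D (h1, h2) X by move=> X; rewrite eq.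
  congr pair; apply/ffunP => X; have := eq X; rewrite !ffunE /=.
  - have := d1 X; have := d2 X; case: (D X) => // /eqP -> /eqP -> //.
  - have := d1 X; have := d2 X; have := e1 X; have := e2 X; have := dis X.
    case: (D X) => /= [/(_ isT) | _ _ _ _ _ //]; case: (E X) => // _ /eqP -> /eqP -> //.
rewrite -(card_in_imset inj); apply: eq_card => g; rewrite [in LHS]inE.
symmetry; apply/imsetP/idP.
- case=> [[g1 g2]]; rewrite !inE /= => /andP[/andP[/domgP d1 p1] /andP[/domgP e1 q1]] ->.
  apply/andP; split; first (apply/andP; split).
  + apply/domgP => X; rewrite ffunE /=; have := d1 X; have := e1 X; have := dis X.
    by case: (D X) => //=; case: (E X).
  + by rewrite (HP _ g1) // => X dX; rewrite ffunE /= dX.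
  + rewrite (HQ _ g2) // => X eX; rewrite ffunE /=.
    by case dX: (D X) => //; move: (dis X dX); rewrite eX.
- move=> /andP[/andP[/domgP dg pg] qg].
  exists ([ffun X => if D X then g X else None], [ffun X => if E X then g X else None]).
    rewrite !inE /=; apply/andP; split; apply/andP; split.
    + apply/domgP => X; rewrite ffunE; have := dg X; rewrite /= /predU /=.
      by case: (D X).
    + by rewrite (HP _ g) // => X dX; rewrite ffunE dX.
    + apply/domgP => X; rewrite ffunE; have := dg X; rewrite /= /predU /=.
      by case: (E X); rewrite ?orbT.
    + by rewrite (HQ _ g) // => X dX; rewrite ffunE dX.
  apply/ffunP => X; rewrite !ffunE /=; have := dg X; rewrite /predU /=.
  by case: (D X) => //=; case: (E X) => // /eqP ->.
Qed.

Lemma eval_ext (S : schema) db (g g' : grounding S) (v : rv S) :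
  (forall X, X \in v.2 -> g X = g' X) -> eval_rv db g v = eval_rv db g' v.
Proof. by move=> h; rewrite /eval_rv (eq_in_pmap (f2 := fun X => g' X)). Qed.

Definition colsOK (S : schema) db (a : rv S -> Val S) (cols : seq (rv S)) (g : grounding S) :=
  all (fun v => eval_rv db g v == a v) cols.

Lemma mem_oneAtts (S : schema) (X : FOV S) v : v \in oneAtts X -> v.2 = [:: X].
Proof. by rewrite /oneAtts => /mapP[f _ ->]. Qed.

Lemma colsOK_ext (S : schema) db a (Y : FOV S) (g g' : grounding S) :
  (forall X, X == Y -> g X = g' X) ->
  colsOK db a (oneAtts Y) g = colsOK db a (oneAtts Y) g'.
Proof.
move=> h; apply: eq_in_all => v /mem_oneAtts e.
by have -> : eval_rv db g v = eval_rv db g' v by apply: eval_ext => X; rewrite e inE; exact: h.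
Qed.

Lemma card_prodY (S : schema) db (D : pred (FOV S)) (P : grounding S -> bool)
    (a : rv S -> Val S) (Ys : seq (FOV S)) :
  uniq Ys -> (forall Y, Y \in Ys -> ~~ D Y) ->
  (forall g g' : grounding S, (forall X, D X -> g X = g' X) -> P g = P g') ->
  #|[set g | domg (fun X => D X || (X \in Ys)) g &&
      (P g && all (fun Y => colsOK db a (oneAtts Y) g) Ys)]| =
  #|[set g | domg D g && P g]| *
    \prod_(Y <- Ys) #|[set g | domg (pred1 Y) g && colsOK db a (oneAtts Y) g]|.
Proof.
elim: Ys => [|Y Ys IH] /=.
  move=> _ _ _; rewrite big_nil muln1; apply: eq_card => g; rewrite !inE andbT.
  by rewrite (domg_ext _ (D' := D)) // => X; rewrite orbF.
move=> /andP[YnYs uYs] nD HP.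
rewrite big_cons mulnCA -IH //; last by move=> Z Z'; apply: nD; rewrite inE Z' orbT.
rewrite mulnC -(@card_merge S (fun X => D X || (X \in Ys)) (pred1 Y)
   (fun g => P g && all (fun Y => colsOK db a (oneAtts Y) g) Ys)).
- apply: eq_card => g; rewrite !inE.
  rewrite (domg_ext _ (D' := predU (fun X => D X || (X \in Ys)) (pred1 Y))); last first.
    by move=> X; rewrite /= inE; case: (X == Y); case: (D X); case: (X \in Ys); rewrite ?orbT.
  by case: (domg _ g); case: (P g); case: (colsOK _ _ _ g); case: (all _ Ys).
- move=> X /orP[dX|XYs]; apply/negP => /eqP E; subst X.
    by move: (nD Y); rewrite inE eqxx dX => /(_ isT).
  by rewrite XYs in YnYs.
- move=> g g' h; congr andb; first by apply: HP => X dX; apply: h; rewrite dX.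
  apply: eq_in_all => Z ZYs; apply: colsOK_ext => X /eqP ->; by apply: h; rewrite ZYs orbT.
- by move=> g g' h; apply: colsOK_ext.
Qed.

Lemma tcnt_cross_list (S : schema) (t : table S) ts a :
  tcnt (cross_list t ts) a = tcnt t a * \prod_(t' <- ts) tcnt t' a.
Proof.
rewrite /cross_list; elim: ts t => [|t' ts IH] t /=; first by rewrite big_nil muln1.
by rewrite IH big_cons /= mulnA.
Qed.

Lemma tcols_cross_list (S : schema) (t : table S) ts :
  tcols (cross_list t ts) = tcols t ++ flatten (map (@tcols S) ts).
Proof.
rewrite /cross_list; elim: ts t => [|t' ts IH] t /=; first by rewrite cats0.
by rewrite IH /= catA.
Qed.

Lemma cross_def (S : schema) db (t : table S) (Ys : seq (FOV S)) :
  uniq Ys -> (forall v Y, v \in tcols t -> Y \in Ys -> v \notin oneAtts Y) ->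
  cross_list_defined t [seq ctX db Y | Y <- Ys].
Proof.
elim: Ys t => [|Y Ys IH] t //= /andP[YnYs uYs] h; split.
  by move=> v vt; apply: h; rewrite ?inE ?eqxx.
apply: IH => // v Z; rewrite mem_cat => /orP[vt|vY] ZYs.
  by apply: h => //; rewrite inE ZYs orbT.
apply/negP => vZ; move: (mem_oneAtts vY) (mem_oneAtts vZ) => -> [] E.
by rewrite E ZYs in YnYs.
Qed.

Lemma occP (S : schema) (vs : seq (rv S)) Z :
  reflect (exists2 v, v \in vs & Z \in v.2) (Z \in occ vs).
Proof. exact: flatten_mapP. Qed.

Lemma occ_cat (S : schema) (s1 s2 : seq (rv S)) : occ (s1 ++ s2) = occ s1 ++ occ s2.
Proof. by rewrite /occ map_cat flatten_cat. Qed.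

Lemma occ_oneAtts (S : schema) (X Z : FOV S) :
  oneAtts X != [::] -> (Z \in occ (oneAtts X)) = (Z == X).
Proof.
move=> ne; apply/occP/eqP => [[v /mem_oneAtts -> ]|->]; first by rewrite inE => /eqP.
case E: (oneAtts X) ne => [|v s] // _; exists v; first by rewrite inE eqxx.
have vX : v \in oneAtts X by rewrite E inE eqxx.
by rewrite (mem_oneAtts vX) inE.
Qed.

Lemma occ_oneAttsR (S : schema) (R : rv S) Z :
  (forall X : FOV S, oneAtts X != [::]) -> (Z \in occ (oneAttsR R)) = (Z \in R.2).
Proof.
move=> ne; apply/occP/idP => [[v /flatten_mapP[X XR vX] Zv]|ZR].
  by move: Zv; rewrite (mem_oneAtts vX) inE => /eqP ->.
case E: (oneAtts Z) (ne Z) => [|v s] // _; exists v.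
  by apply/flatten_mapP; exists Z => //; rewrite E inE eqxx.
have vX : v \in oneAtts Z by rewrite E inE eqxx.
by rewrite (mem_oneAtts vX) inE.
Qed.

Lemma typed_pmap (S : schema) (g : grounding S) (s : seq (FOV S)) :
  (forall X, X \in s -> if g X is Some i then i \in members (popOf X) else false) ->
  all2 (fun i p => i \in members p) (pmap (fun X => g X) s) (map (@popOf S) s).
Proof.
elim: s => [|X s IH] //= h; have := h X; rewrite inE eqxx => /(_ isT).
case: (g X) => // i hi /=; rewrite hi IH // => Y Ys; by apply: h; rewrite inE Ys orbT.
Qed.

Lemma qcount_split (S : schema) db (cols Rs : seq (rv S)) (c : rv S * Val S) a :
  qcount db ([seq (v, a v) | v <- cols] ++ (condT Rs ++ [:: c])) =
  #|[set g | domg (fun X => X \in occ (cols ++ Rs ++ [:: c.1])) g &&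
     ((colsOK db a cols g && all (fun r => eval_rv db g r == vT S) Rs)
      && (eval_rv db g c.1 == c.2))]|.
Proof.
apply: eq_card => g; rewrite !inE; congr andb.
  by rewrite /domg !map_cat -!map_comp !map_id_in //= => ? _.
rewrite !all_cat /colsOK !all_map /= andbT andbA; congr andb; congr andb.
Qed.

Lemma qcount_ct (S : schema) db (cols Rs : seq (rv S)) a :
  qcount db ([seq (v, a v) | v <- cols] ++ condT Rs) =
  #|[set g | domg (fun X => X \in occ (cols ++ Rs)) g &&
     (colsOK db a cols g && all (fun r => eval_rv db g r == vT S) Rs)]|.
Proof.
apply: eq_card => g; rewrite !inE; congr andb.
  by rewrite /domg !map_cat -!map_comp !map_id_in //= => ? _.
by rewrite !all_cat /colsOK !all_map.
Qed.

Lemma card_split2 (T : finType) (V : eqType) (A B : pred T) (f : T -> V) t u :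
  t != u -> (forall x, A x && B x -> (f x == t) || (f x == u)) ->
  #|[set x | A x && (B x && (f x == u))]| + #|[set x | A x && (B x && (f x == t))]| =
  #|[set x | A x && B x]|.
Proof.
move=> ne h; rewrite -(cardID [pred x | f x == t] [set x | A x && B x]) addnC.
have e1 : forall x, (A x && (B x && (f x == u))) = (~~(f x == t) && (A x && B x)).
  move=> x; move: (h x); case: (A x); case: (B x); rewrite /= ?andbF //.
  move=> /(_ isT) /orP[] /eqP ->.
    by move: ne; rewrite eqxx; case: (t == u).
  by move: ne; rewrite eqxx eq_sym; case: (u == t).
have e2 : forall x, (A x && (B x && (f x == t))) = ((f x == t) && (A x && B x)).
  by move=> x; case: (f x == t); case: (A x); case: (B x).
congr addn; apply: eq_card => x; rewrite !inE /=; [rewrite e2 | rewrite e1];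
  by case: (f x == t); case: (A x); case: (B x).
Qed.

Lemma qcount_ctX (S : schema) db (X : FOV S) a :
  oneAtts X != [::] ->
  tcnt (ctX db X) a = #|[set g | domg (pred1 X) g && colsOK db a (oneAtts X) g]|.
Proof.
move=> ne; apply: eq_card => g; rewrite !inE cats0; congr andb.
  apply: domg_ext => Z /=; rewrite -map_comp map_id_in ?occ_oneAtts //.
by rewrite /colsOK all_map.
Qed.

Theorem proposition1 (S : schema) (db : Fn S -> seq (Ind S) -> Val S)
    (R : rv S) (Rs : seq (rv S)) (Vars : seq (rv S)) :
  wf_schema S -> valid_db db ->
  isRel R.1 -> wf_rv R ->
  (forall r, r \in Rs -> isRel r.1 /\ wf_rv r) ->
  (forall v, v \in Vars -> wf_rv v) ->
  R \notin Vars ->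
  (forall v, v \in twoAtts R -> v \notin Vars) ->
  (forall X : FOV S, oneAtts X != [::]) ->
  (forall X, X \in R.2 -> X \in occ Vars -> {subset oneAtts X <= Vars}) ->
  (forall X, X \in R.2 -> X \in occ Rs -> X \in occ Vars) ->
  let Xs := undup [seq X <- R.2 | X \notin occ Vars] in
  let lhs := ct db (Vars ++ oneAttsR R) (condT Rs ++ [:: (R, vF S)]) in
  let prod := cross_list (ct db Vars (condT Rs)) [seq ctX db X | X <- Xs] in
  let sub := ct db (Vars ++ oneAttsR R) (condT Rs ++ [:: (R, vT S)]) in
  [/\ cross_list_defined (ct db Vars (condT Rs)) [seq ctX db X | X <- Xs],
      diff_defined prod sub &
      table_eq lhs (ct_diff prod sub)].
Proof.
move=> wfS [vdb1 _] relR wfR _ _ _ _ ne hsub hocc Xs lhs prod sub.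
have XsP : forall X, (X \in Xs) = (X \in R.2) && (X \notin occ Vars).
  by move=> X; rewrite mem_undup mem_filter andbC.
have uXs : uniq Xs := undup_uniq _.
have colsE : tcols prod =i tcols sub.
  rewrite /prod tcols_cross_list /= -map_comp => v; rewrite !mem_cat.
  case vV: (v \in Vars) => //=.
  apply/flatten_mapP/flatten_mapP => [[X XXs vX]|[X XR vX]].
    by exists X => //; move: XXs; rewrite XsP => /andP[].
  case XV: (X \in occ Vars); first by rewrite (hsub X XR XV v vX) in vV.
  by exists X => //; rewrite XsP XR XV.
have key : forall a, tcnt lhs a + tcnt sub a = tcnt prod a.
  move=> a; rewrite /lhs /sub /= !qcount_split /=.
  case: wfS => hTF _ _ _.
  rewrite card_split2 //; last first.
    move=> g /andP[/domgP dg _].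
    have typ : typed R.1 (pmap (fun X => g X) R.2).
      rewrite /typed -(eqP wfR); apply: typed_pmap => X XR; have := dg X.
      have XO : X \in occ ((Vars ++ oneAttsR R) ++ Rs ++ [:: R]).
        rewrite !occ_cat !mem_cat; apply/orP; right; apply/orP; right.
        by rewrite XR.
      by rewrite XO.
    have := vdb1 R.1 _ typ; move: relR => /andP[/eqP hr _]; rewrite hr !inE.
    by [].
  rewrite /prod tcnt_cross_list big_map /= qcount_ct.
  rewrite (eq_bigr (fun X => #|[set g | domg (pred1 X) g && colsOK db a (oneAtts X) g]|));
    last by move=> X _; apply: qcount_ctX.
  rewrite -(@card_prodY S db (fun X => X \in occ (Vars ++ Rs))
     (fun g => colsOK db a Vars g && all (fun r => eval_rv db g r == vT S) Rs) a Xs) //.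
  - apply: eq_card => g; rewrite !inE; congr andb.
      apply: domg_ext => X; rewrite !occ_cat !mem_cat occ_oneAttsR // XsP in_nil orbF.
      by case: (X \in occ Vars); case: (X \in R.2); case: (X \in occ Rs).
    have hc : colsOK db a Vars g ->
        colsOK db a (oneAttsR R) g = all (fun Y => colsOK db a (oneAtts Y) g) Xs.
      move=> cV; apply/allP/allP => [H Y|H v /flatten_mapP[X XR vX]].
        rewrite XsP => /andP[YR _]; apply/allP => v vY; apply: H.
        by apply/flatten_mapP; exists Y.
      case XV: (X \in occ Vars); first by apply: (allP cV); apply: (hsub X XR XV).
      have XXs : X \in Xs by rewrite XsP XR XV.
      exact: (allP (H X XXs)) v vX.
    rewrite /colsOK all_cat -/(colsOK db a Vars g) -/(colsOK db a (oneAttsR R) g).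
    case cV: (colsOK db a Vars g) => //=; rewrite hc //.
    by case: (all _ Xs); case: (all _ Rs).
  - move=> Y; rewrite XsP => /andP[YR YnV]; rewrite occ_cat mem_cat negb_or YnV /=.
    by apply/negP => /(hocc Y YR); rewrite (negbTE YnV).
  - move=> g g' h; congr andb; apply: eq_in_all => v vV.
      have -> // : eval_rv db g v = eval_rv db g' v.
      apply: eval_ext => X Xv; apply: h; rewrite occ_cat mem_cat; apply/orP; left.
      by apply/occP; exists v.
    have -> // : eval_rv db g v = eval_rv db g' v.
    apply: eval_ext => X Xv; apply: h; rewrite occ_cat mem_cat; apply/orP; right.
    by apply/occP; exists v.
split.
- apply: cross_def => // v Y /= vV; rewrite XsP => /andP[_ YnV].
  apply/negP => vY; move/negP: YnV; apply; apply/occP; exists v => //.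
  by rewrite (mem_oneAtts vY) inE.
- by split => [v|a]; [rewrite colsE | rewrite -key leq_addl].
- split => [v|a]; first by rewrite [tcols (ct_diff _ _)]/= colsE.
  by rewrite /= -key addnK.
Qed.
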